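(* For real $u,w$ and an integer $n\ge 1$ let $g_n(u,w):=\sum_{i=1}^n i\,w^{i-1}u^{n-i}$. Then for every even integer $n\ge 6$, $$g_n(u,w)=(u^{n-1}+w^{n-1})+2u^{n-2}w+\sum_{i=1}^{(n-4)/2}u^{2i}w^{n-1-2i}+(u+w)\sum_{i=0}^{(n-4)/2}(n-1-2i)u^{2i}w^{n-2-2i}.$$ Furthermore, let $\beta>0$, $k>0$, and let $\delta$ be the involution defined in the context, $w=\delta(u)$. Then for all even integers $n\ge 2$: (i) if $-k<u_0<0$, then $g_n(u,w)<0$ for all $u\in(0,u_1)$; (ii) if $u_0<-k$, then $g_n(w,u)>0$ for all $u\in(0,k)$.
   Context: $\Phi(u)=\beta\left(-\frac{u^4}{4}+\frac{k+u_0}{3}u^3-\frac{ku_0}{2}u^2\right)$. Case $-k<u_0<0$: $u_1$ is the unique point of $(0,k)$ with $\Phi(u_1)=\Phi(u_0)$, and for $u\in(0,u_1)$, $\delta(u)$ is the unique $w\in(u_0,0)$ with $\Phi(w)=\Phi(u)$. Case $u_0<-k$: $w_2$ is the unique point of $(u_0,0)$ with $\Phi(w_2)=\Phi(k)$, and for $u\in(0,k)$, $\delta(u)$ is the unique $w\in(w_2,0)$ with $\Phi(w)=\Phi(u)$. *)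

(* Defs.v *)
From mathcomp Require Import all_boot all_order all_algebra.
From mathcomp Require Import reals.
Set Implicit Arguments. Unset Strict Implicit. Unset Printing Implicit Defensive.
Import Order.TTheory GRing.Theory Num.Theory.
Local Open Scope ring_scope.

Definition g {R : realType} (n : nat) (u w : R) : R :=
  \sum_(1 <= i < n.+1) i%:R * w ^+ (i - 1) * u ^+ (n - i).

Definition Phi {R : realType} (beta k u0 u : R) : R :=
  beta * (- (u ^+ 4) / 4%:R + (k + u0) / 3%:R * u ^+ 3 - k * u0 / 2%:R * u ^+ 2).

(* Main.v *)
Require Import Defs.
From mathcomp Require Import all_boot all_order all_algebra.
From mathcomp Require Import reals.
From mathcomp Require Import ring lra zify.
Import Order.TTheory GRing.Theory Num.Theory.
Local Open Scope ring_scope.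

Section S.
Variable R : realType.
Lemma g0 (u w : R) : g 0 u w = 0.
Proof. by rewrite /g big_geq. Qed.

Lemma gS n (u w : R) : g n.+1 u w = u * g n u w + n.+1%:R * w ^+ n.
Proof.
rewrite /g big_nat_recr //= subSS subn0 subnn expr0 mulr1; congr (_ + _).
rewrite mulr_sumr big_nat_cond [RHS]big_nat_cond; apply: eq_bigr => i /andP[/andP[_ Hi] _].
rewrite subSn; last by rewrite -ltnS.
rewrite exprS; ring.
Qed.

Definition S1 m (u w : R) := \sum_(1 <= i < m.+2) u ^+ (2 * i) * w ^+ (2 * m + 6 - 1 - 2 * i).
Definition S2 m (u w : R) := \sum_(0 <= i < m.+2)
   (2 * m + 6 - 1 - 2 * i)%:R * u ^+ (2 * i) * w ^+ (2 * m + 6 - 2 - 2 * i).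

Lemma S1S m u w : S1 m.+1 u w = u ^+ 2 * w ^+ (2 * m + 5) + u ^+ 2 * S1 m u w.
Proof.
rewrite /S1 big_nat_recl // mulr_sumr; congr (_ + _).
  by congr (_ * _); congr (_ ^+ _); lia.
apply: eq_bigr => i _.
have -> : (2 * m.+1 + 6 - 1 - 2 * i.+1 = 2 * m + 6 - 1 - 2 * i)%N by lia.
have -> : (2 * i.+1 = (2 * i).+2)%N by lia.
rewrite !exprS; ring.
Qed.

Lemma S2S m u w : S2 m.+1 u w = (2 * m + 7)%:R * w ^+ (2 * m + 6) + u ^+ 2 * S2 m u w.
Proof.
rewrite /S2 big_nat_recl // mulr_sumr; congr (_ + _).
  rewrite muln0 subn0 expr0 mulr1; congr (_%:R * _ ^+ _); lia.
apply: eq_bigr => i _.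
have -> : (2 * m.+1 + 6 - 1 - 2 * i.+1 = 2 * m + 6 - 1 - 2 * i)%N by lia.
have -> : (2 * m.+1 + 6 - 2 - 2 * i.+1 = 2 * m + 6 - 2 - 2 * i)%N by lia.
have -> : (2 * i.+1 = (2 * i).+2)%N by lia.
rewrite !exprS; ring.
Qed.

Lemma part1 m (u w : R) : g (2 * m + 6) u w =
  (u ^+ (2 * m + 6 - 1) + w ^+ (2 * m + 6 - 1)) + 2%:R * u ^+ (2 * m + 6 - 2) * w
  + S1 m u w + (u + w) * S2 m u w.
Proof.
elim: m => [|m IH].
  rewrite /S1 /S2 big_nat1 big_nat_recr //= big_nat1.
  rewrite !gS g0 /=.
  change (2*0+6-1)%N with 5%N; change (2*0+6-2)%N with 4%N; change (2*1)%N with 2%N.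
  change (5-2)%N with 3%N; change (5-2*0)%N with 5%N; change (2*0)%N with 0%N.
  change (4-0)%N with 4%N; change (4-2)%N with 2%N.
  ring.
have -> : (2 * m.+1 + 6 = (2 * m + 6).+2)%N by lia.
rewrite !gS IH S1S S2S.
set p := (2 * m + 4)%N.
have -> : (2 * m + 6 = p.+2)%N by lia.
have -> : (2 * m + 5 = p.+1)%N by lia.
have -> : (2 * m + 7 = p.+3)%N by lia.
have -> : (p.+2.+2 - 1 = p.+3)%N by lia.
have -> : (p.+2.+2 - 2 = p.+2)%N by lia.
have -> : (p.+2 - 1 = p.+1)%N by lia.
have -> : (p.+2 - 2 = p)%N by lia.
rewrite !exprS; ring.
Qed.
Lemma g_closed n (a w : R) :
  g n a w * (w - a) ^+ 2 = n%:R * w ^+ n.+1 - n.+1%:R * w ^+ n * a + a ^+ n.+1.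
Proof.
elim: n => [|n IH]; first by rewrite g0 !expr0 expr1; ring.
rewrite gS mulrDl -[a * g n a w * _]mulrA IH !exprS.
move: (w ^+ n) (a ^+ n) => W A; ring.
Qed.

Lemma g_neg n (a b : R) : ~~ odd n -> (2 <= n)%N -> 0 < a -> a <= b -> g n a (- b) < 0.
Proof.
move=> ev n2 a0 ab.
have hpos : 0 < (- b - a) ^+ 2.
  by rewrite exprn_even_gt0 //; lra.
rewrite -(pmulr_llt0 _ hpos) g_closed.
have En : (- b) ^+ n = b ^+ n by rewrite exprNn -signr_odd (negbTE ev) expr0 mul1r.
have -> : (- b) ^+ n.+1 = - b ^+ n.+1 by rewrite !exprS En mulNr.
have b0 : 0 < b by lra.
have hab : a ^+ n <= b ^+ n by apply: lerXn2r => //; rewrite nnegrE; lra.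
have h1 : a ^+ n.+1 <= b ^+ n * a by rewrite exprSr ler_wpM2r // ltW.
have h2 : 0 < b ^+ n.+1 by rewrite exprn_gt0.
have h3 : 0 < b ^+ n * a by rewrite mulr_gt0 // exprn_gt0.
have h4 : (0 : R) <= n%:R by [].
have h5 : 0 < n%:R * b ^+ n.+1 by rewrite mulr_gt0 // ltr0n; lia.
have h6 : 0 <= n%:R * (b ^+ n * a) by rewrite mulr_ge0 // ltW.
rewrite mulrS mulrDl mul1r En mulrDl -mulrA.
rewrite mulrN; lra.
Qed.
Lemma gNN n (a b : R) : g n (- a) (- b) = (-1) ^+ n.+1 * g n a b.
Proof.
elim: n => [|n IH]; first by rewrite !g0 mulr0.
rewrite !gS IH [(- b) ^+ _]exprNn !exprS.
move: ((-1) ^+ n) (g n a b) (b ^+ n) => s G B; ring.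
Qed.
Lemma gNN_even n (a b : R) : ~~ odd n -> g n a b = - g n (- a) (- b).
Proof.
move=> ev; rewrite gNN -signr_odd /= (negbTE ev) /= expr1; ring.
Qed.
Lemma half_form n : ~~ odd n -> (6 <= n)%N -> exists m, n = (2 * m + 6)%N /\ ((n - 4)./2 = m.+1)%N.
Proof.
move=> ev n6; exists ((n - 6)./2).
have := odd_double_half (n - 6); rewrite oddB // (negbTE ev) /= => h.
have e : n = (2 * (n - 6)./2 + 6)%N by rewrite -?mul2n in h *; lia.
split=> //.
have -> : (n - 4 = (((n-6)./2).+1).*2)%N by rewrite -?mul2n in h *; lia.
by rewrite doubleK.
Qed.
End S.

Section S2.
Variable R : realType.
Variables beta k u0 : R.
Definition fd (x : R) := - (x * (x - k) * (x - u0)).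

Lemma simpson a b : Phi beta k u0 b - Phi beta k u0 a =
  beta * (b - a) * (fd a + 4%:R * fd ((a + b) / 2%:R) + fd b) / 6%:R.
Proof. rewrite /Phi /fd; by field. Qed.

Lemma odd_diff u : Phi beta k u0 u - Phi beta k u0 (- u) = beta * 2%:R * (k + u0) / 3%:R * u ^+ 3.
Proof. rewrite /Phi; by field. Qed.

Lemma fd_neg x : u0 <= x <= 0 -> 0 < k -> fd x <= 0.
Proof.
move=> /andP[h1 h2] hk; rewrite /fd oppr_le0 mulr_ge0 //; last lra.
rewrite mulr_le0 //; lra.
Qed.

Lemma fd_negs x : u0 < x < 0 -> 0 < k -> fd x < 0.
Proof.
move=> /andP[h1 h2] hk; rewrite /fd oppr_lt0 mulr_gt0 //; last lra.
rewrite nmulr_rgt0; lra.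
Qed.

Lemma fd_pos x : 0 <= x <= k -> u0 < 0 -> 0 <= fd x.
Proof.
move=> /andP[h1 h2] hk; rewrite /fd oppr_ge0 mulr_le0_ge0 //; last lra.
rewrite mulr_ge0_le0 //; lra.
Qed.

Lemma fd_poss x : 0 < x < k -> u0 < 0 -> 0 < fd x.
Proof.
move=> /andP[h1 h2] hk; rewrite /fd oppr_gt0 pmulr_llt0; last lra.
rewrite pmulr_rlt0; lra.
Qed.

Lemma Phi_dec a b : 0 < beta -> 0 < k -> u0 <= a -> a < b -> b <= 0 ->
  Phi beta k u0 b < Phi beta k u0 a.
Proof.
move=> hb hk h1 h2 h3; rewrite -subr_lt0 simpson.
have := fd_neg a _ hk; have := fd_neg b _ hk; have := fd_negs ((a+b)/2%:R) _ hk.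
have HH : u0 < (a + b) / 2%:R < 0 by apply/andP; split; lra.
move=> /(_ HH) e1 /(_ ltac:(apply/andP; split; lra)) e2 /(_ ltac:(apply/andP; split; lra)) e3.
rewrite pmulr_llt0 ?invr_gt0 // pmulr_rlt0 ?mulr_gt0 //; [lra|lra].
Qed.

Lemma Phi_inc a b : 0 < beta -> u0 < 0 -> 0 <= a -> a < b -> b <= k ->
  Phi beta k u0 a < Phi beta k u0 b.
Proof.
move=> hb hk h1 h2 h3; rewrite -subr_gt0 simpson.
have := fd_pos a _ hk; have := fd_pos b _ hk; have := fd_poss ((a+b)/2%:R) _ hk.
have HH : 0 < (a + b) / 2%:R < k by apply/andP; split; lra.
move=> /(_ HH) e1 /(_ ltac:(apply/andP; split; lra)) e2 /(_ ltac:(apply/andP; split; lra)) e3.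
rewrite pmulr_lgt0 ?invr_gt0 // pmulr_rgt0 ?mulr_gt0 //; [lra|lra].
Qed.
End S2.

Theorem lemma3p6 (R : realType) :
  (forall (n : nat), ~~ odd n -> (6 <= n)%N -> forall u w : R,
     g n u w =
       (u ^+ (n - 1) + w ^+ (n - 1)) + 2%:R * u ^+ (n - 2) * w
       + \sum_(1 <= i < ((n - 4)./2).+1) u ^+ (2 * i) * w ^+ (n - 1 - 2 * i)
       + (u + w) * \sum_(0 <= i < ((n - 4)./2).+1)
                     (n - 1 - 2 * i)%:R * u ^+ (2 * i) * w ^+ (n - 2 - 2 * i))
  /\
  (forall (beta k u0 : R), 0 < beta -> 0 < k ->
   forall (n : nat), ~~ odd n -> (2 <= n)%N ->
     (* (i) case -k < u0 < 0 *)
     ((- k < u0 < 0) ->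
        forall u1 : R, 0 < u1 < k -> Phi beta k u0 u1 = Phi beta k u0 u0 ->
        forall u : R, 0 < u < u1 ->
        forall w : R, u0 < w < 0 -> Phi beta k u0 w = Phi beta k u0 u ->
          g n u w < 0)
     /\
     (* (ii) case u0 < -k *)
     (u0 < - k ->
        forall w2 : R, u0 < w2 < 0 -> Phi beta k u0 w2 = Phi beta k u0 k ->
        forall u : R, 0 < u < k ->
        forall w : R, w2 < w < 0 -> Phi beta k u0 w = Phi beta k u0 u ->
          0 < g n w u)).
Proof.
split.
  move=> n ev n6 u w.
  have [m [-> ->]] := half_form n ev n6.
  exact: part1.
move=> beta k u0 hb hk n ev n2; split.
- move=> /andP[hk1 hu0] u1 /andP[hu1 hu1k] Pu1 u /andP[hu huu1] w /andP[hw1 hw2] Pw.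
  have Hu : u < - u0.
    rewrite ltNge; apply/negP => H.
    have A : Phi beta k u0 (- u0) <= Phi beta k u0 u.
      case/boolP: (- u0 == u) => [/eqP -> //|ne].
      apply/ltW/Phi_inc => //; [lra | rewrite lt_neqAle ne H //| lra].
    have B : Phi beta k u0 u < Phi beta k u0 u1 by apply: Phi_inc => //; lra.
    have C := odd_diff _ beta k u0 (- u0); rewrite opprK in C.
    have D : 0 < beta * 2%:R * (k + u0) / 3%:R * (- u0) ^+ 3.
      rewrite mulr_gt0 ?exprn_gt0 ?oppr_gt0 // mulr_gt0 ?invr_gt0 ?ltr0n // mulr_gt0 ?mulr_gt0 ?ltr0n //; lra.
    lra.
  have Huw : u <= - w.
    rewrite leNgt; apply/negP => H.
    have A : Phi beta k u0 w < Phi beta k u0 (- u) by apply: Phi_dec => //; lra.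
    have C := odd_diff _ beta k u0 u.
    have D : 0 < beta * 2%:R * (k + u0) / 3%:R * u ^+ 3.
      rewrite mulr_gt0 ?exprn_gt0 // mulr_gt0 ?invr_gt0 ?ltr0n // mulr_gt0 ?mulr_gt0 ?ltr0n //; lra.
    lra.
  rewrite -[w]opprK; exact: g_neg.
- move=> hu0 w2 /andP[hw21 hw22] Pw2 u /andP[hu hukk] w /andP[hw1 hw2] Pw.
  have Hwu : - w <= u.
    rewrite leNgt; apply/negP => H.
    have A : Phi beta k u0 (- u) < Phi beta k u0 w by apply: Phi_dec => //; lra.
    have C := odd_diff _ beta k u0 u.
    have D : beta * 2%:R * (k + u0) / 3%:R * u ^+ 3 < 0.
      rewrite pmulr_llt0 ?exprn_gt0 // pmulr_llt0 ?invr_gt0 ?ltr0n // pmulr_rlt0 ?mulr_gt0 ?ltr0n //; lra.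
    lra.
  rewrite (@gNN_even _ n w u ev) oppr_gt0 -[X in g _ _ (- X)]opprK.
  apply: g_neg => //; lra.
Qed.
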